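(* For every integer $k\geq 1$, in $\mathbb{Q}(t)$, $$\frac{2-t}{t^{\lfloor\log_2 k\rfloor}}\cdot\frac{S_{2k+1}(t)}{B_{2k+1}(t)}=\frac{2-t}{t^{\lfloor\log_2 k\rfloor}}\cdot\frac{S_k(t)}{B_k(t)}+\frac{B_{k+1}(t)-(t-1)(B_k(t)+1)}{B_k(t)B_{2k+1}(t)}.$$
   Context: The Stern polynomials $B_n(t)\in\mathbb{Z}[t]$ are defined by $B_0(t)=0$, $B_1(t)=1$, and for $n\geq 1$: $B_{2n}(t)=tB_n(t)$, $B_{2n+1}(t)=B_n(t)+B_{n+1}(t)$ (and $B_n\neq 0$ for $n\ge1$). The polynomials $S_n(t)$, $n\ge1$, are defined by $S_1(t)=S_2(t)=0$ and, for $k\geq 1$, $S_{2k}(t)=tS_k(t)$, $S_{2k+1}(t)=S_k(t)+S_{k+1}(t)+t^{\lfloor\log_2 k\rfloor}$. *)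

(* Defs.v *)
From HB Require Import structures.
From mathcomp Require Import all_boot all_order all_algebra.
From Stdlib Require Import Lia.
Set Implicit Arguments. Unset Strict Implicit. Unset Printing Implicit Defensive.
Import Order.TTheory GRing.Theory Num.Theory.
Local Open Scope ring_scope.

(* Fuel-based evaluation of the recursions; the fuel n is sufficient. *)
Fixpoint Bf (fuel n : nat) : {poly rat} :=
  match fuel with
  | 0%N => 0
  | f.+1 =>
    if (n <= 1)%N then n%:R
    else if odd n then Bf f n./2 + Bf f (n./2).+1
    else 'X * Bf f n./2
  end.

Definition B (n : nat) : {poly rat} := Bf n n.

Fixpoint Sf (fuel n : nat) : {poly rat} :=
  match fuel with
  | 0%N => 0
  | f.+1 =>
    if (n <= 2)%N then 0
    else if odd n then Sf f n./2 + Sf f (n./2).+1 + 'X ^+ trunc_log 2 n./2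
    else 'X * Sf f n./2
  end.

(* S_n(t) for n >= 1 (S_0 is set to 0, it is never used). *)
Definition S (n : nat) : {poly rat} := Sf n n.

Lemma half_le n : (1 < n)%N -> (n./2 <= n.-1)%N.
Proof.
case: n => [|[|m]] // _; rewrite leq_half_double /= -addnn.
by rewrite !addnS !addSn !ltnS ltnW // ltnS leq_addr.
Qed.

Lemma half_odd_le n : (1 < n)%N -> odd n -> ((n./2).+1 <= n.-1)%N.
Proof.
case: n => [|[|[|m]]] // _ _; rewrite ltn_half_double /= -addnn.
by rewrite !addnS !addSn !ltnS leq_addr.
Qed.

Lemma Bf_fuel f g n : (n <= f)%N -> (n <= g)%N -> Bf f n = Bf g n.
Proof.
elim: f g n => [|f IH] [|g] n /=; rewrite ?leqn0 //.
- by move=> /eqP -> _.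
- by move=> _ /eqP ->.
move=> hf hg; case: ifP => // h1; have h1' : (1 < n)%N by rewrite ltnNge h1.
have hn : (n.-1 <= f)%N by rewrite -ltnS (ltn_predK h1').
have hn' : (n.-1 <= g)%N by rewrite -ltnS (ltn_predK h1').
have a := half_le h1'.
have a1 := leq_trans a hn; have a2 := leq_trans a hn'.
case: ifP => ho; last by rewrite (IH g).
have b := half_odd_le h1' ho.
have b1 := leq_trans b hn; have b2 := leq_trans b hn'.
by rewrite (IH g) // (IH g (n./2).+1).
Qed.

Lemma Sf_fuel f g n : (n <= f)%N -> (n <= g)%N -> Sf f n = Sf g n.
Proof.
elim: f g n => [|f IH] [|g] n /=; rewrite ?leqn0 //.
- by move=> /eqP -> _.
- by move=> _ /eqP ->.
move=> hf hg; case: ifP => // h1; have h1' : (1 < n)%N by apply: ltnW; rewrite ltnNge h1.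
have hn : (n.-1 <= f)%N by rewrite -ltnS (ltn_predK h1').
have hn' : (n.-1 <= g)%N by rewrite -ltnS (ltn_predK h1').
have a := half_le h1'.
have a1 := leq_trans a hn; have a2 := leq_trans a hn'.
case: ifP => ho; last by rewrite (IH g).
have b := half_odd_le h1' ho.
have b1 := leq_trans b hn; have b2 := leq_trans b hn'.
by rewrite (IH g) // (IH g (n./2).+1).
Qed.


Lemma Bf_S f n : Bf f.+1 n =
  if (n <= 1)%N then n%:R
  else if odd n then Bf f n./2 + Bf f (n./2).+1 else 'X * Bf f n./2.
Proof. by []. Qed.

Lemma Sf_S f n : Sf f.+1 n =
  if (n <= 2)%N then 0
  else if odd n then Sf f n./2 + Sf f (n./2).+1 + 'X ^+ trunc_log 2 n./2
  else 'X * Sf f n./2.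
Proof. by []. Qed.

Lemma B_rec n : (1 < n)%N ->
  B n = if odd n then B n./2 + B (n./2).+1 else 'X * B n./2.
Proof.
move=> h; have a := half_le h; have b := half_odd_le h.
have -> : B n = Bf n.-1.+1 n by rewrite (ltn_predK h).
rewrite Bf_S leqNgt h /=.
rewrite (@Bf_fuel n.-1 (n./2) (n./2)) //.
case: ifP => ho //.
by rewrite (@Bf_fuel n.-1 (n./2).+1 (n./2).+1) // b.
Qed.

Lemma S_rec n : (2 < n)%N ->
  S n = if odd n then S n./2 + S (n./2).+1 + 'X ^+ trunc_log 2 n./2
        else 'X * S n./2.
Proof.
move=> h; have h' : (1 < n)%N by apply: ltnW.
have a := half_le h'; have b := half_odd_le h'.
have -> : S n = Sf n.-1.+1 n by rewrite (ltn_predK h).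
rewrite Sf_S leqNgt h /=.
rewrite (@Sf_fuel n.-1 (n./2) (n./2)) //.
case: ifP => ho //.
by rewrite (@Sf_fuel n.-1 (n./2).+1 (n./2).+1) // b.
Qed.

Lemma B_0 : B 0 = 0. Proof. by []. Qed.
Lemma B_1 : B 1 = 1. Proof. by []. Qed.

Lemma B_even n : (1 <= n)%N -> B (n.*2) = 'X * B n.
Proof.
move=> h; rewrite B_rec ?odd_double ?doubleK //.
by rewrite -addnn -add1n leq_add.
Qed.

Lemma B_odd n : (1 <= n)%N -> B (n.*2.+1) = B n + B n.+1.
Proof.
move=> h; rewrite B_rec /= ?odd_double ?uphalf_double //.
by rewrite ltnS -addnn (leq_trans h) ?leq_addr.
Qed.

Lemma S_1 : S 1 = 0. Proof. by []. Qed.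
Lemma S_2 : S 2 = 0. Proof. by []. Qed.

Lemma S_even n : (1 <= n)%N -> S (n.*2) = 'X * S n.
Proof.
case: n => [|[|n]] // _; first by rewrite /S /= mulr0.
by rewrite S_rec ?odd_double ?doubleK // -addnn !addnS !addSn !ltnS.
Qed.

Lemma S_odd n : (1 <= n)%N ->
  S (n.*2.+1) = S n + S n.+1 + 'X ^+ trunc_log 2 n.
Proof.
move=> h; rewrite S_rec /= ?odd_double ?uphalf_double //.
by rewrite ltnS -addnn -add1n leq_add.
Qed.

(* Main.v *)
Require Import Defs.
From HB Require Import structures.
From mathcomp Require Import all_boot all_order all_algebra fraction.
From mathcomp Require Import ring zify.
Import Order.TTheory GRing.Theory Num.Theory.
Local Open Scope ring_scope.

Lemma split_k k : (2 <= k)%N -> exists j, [/\ (1 <= j)%N, (j < k)%N & (k = j.*2 \/ k = j.*2.+1)].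
Proof.
move=> hk; exists k./2; have e := odd_double_half k.
rewrite -addnn in e *.
case: (odd k) e => /= e; split; try lia.
Qed.

Lemma B_pos1 k : (1 <= k)%N -> 0 < (B k).[1].
Proof.
elim/ltn_ind: k => k IH hk.
case: (ltngtP k 1) => [|h|->]; first by case: k hk {IH}.
  2: by rewrite B_1 hornerE.
have [j [hj jk [ek|ek]]] := split_k k h; rewrite ek.
  by rewrite B_even // hornerM hornerX mul1r IH.
rewrite B_odd // hornerD addr_gt0 ?IH //.
rewrite ek -addnn; lia.
Qed.

Lemma key k : (1 <= k)%N ->
  (2 - 'X) * (S k.+1 * B k - S k * B k.+1) =
  'X ^+ trunc_log 2 k * (B k.+1 - B k + 1 - 'X) :> {poly rat}.
Proof.
elim/ltn_ind: k => k IH hk.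
case: (ltngtP k 1) => [|h|->]; first by case: k hk {IH}.
  2: by rewrite S_1 S_2 B_1 (B_even (n:=1)) // trunc_log1 expr0; ring.
have [j [hj jk [ek|ek]]] := split_k k h; subst k.
- have IHj := IH j jk hj.
  rewrite S_odd // S_even // B_odd // B_even // trunc_log2_double //.
  transitivity ('X * ((2 - 'X) * (S j.+1 * B j - S j * B j.+1))
     + (2 - 'X) * 'X ^+ (trunc_log 2 j).+1 * B j); first by rewrite exprS; ring.
  by rewrite IHj exprS; ring.
- have IHj := IH j jk hj.
  have e2 : (j.*2.+1).+1 = (j.+1).*2 by rewrite doubleS.
  have tl : trunc_log 2 j.*2.+1 = (trunc_log 2 j).+1.
    by rewrite trunc_log2S /= ?uphalf_double // ltnS double_gt0.
  rewrite e2 S_odd // S_even // B_odd // B_even // tl.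
  transitivity ('X * ((2 - 'X) * (S j.+1 * B j - S j * B j.+1))
     - (2 - 'X) * 'X ^+ (trunc_log 2 j).+1 * B j.+1); first by rewrite exprS; ring.
  by rewrite IHj exprS; ring.
Qed.

Lemma B_neq0 k : (1 <= k)%N -> B k != 0.
Proof. move=> hk; apply/eqP => e; have := B_pos1 k hk; by rewrite e horner0 ltxx. Qed.

Lemma alg (K : fieldType) (x s s1 b b1 T : K) : T != 0 -> b != 0 -> b + b1 != 0 ->
  (1 + 1 - x) * (s1 * b - s * b1) = T * (b1 - b + 1 - x) ->
  (2 - x) / T * ((s + s1 + T) / (b + b1)) =
  (2 - x) / T * (s / b) + (b1 - (x - 1) * (b + 1)) / (b * (b + b1)).
Proof.
move=> nT nb nb2 H; apply/eqP; rewrite -subr_eq0; apply/eqP.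
transitivity (((1 + 1 - x) * (s1 * b - s * b1) - T * (b1 - b + 1 - x)) / (T * b * (b + b1))).
  by field; rewrite nT nb nb2.
by rewrite (_ : _ - _ = 0) ?mul0r // H subrr.
Qed.

Theorem mainTheorem14 (k : nat) (hk : (1 <= k)%N) :
  let t : {fraction {poly rat}} := FracField.tofrac ('X : {poly rat}) in
  let F (p : {poly rat}) : {fraction {poly rat}} := FracField.tofrac p in
  (2 - t) / t ^+ trunc_log 2 k * (F (S k.*2.+1) / F (B k.*2.+1)) =
  (2 - t) / t ^+ trunc_log 2 k * (F (S k) / F (B k))
  + (F (B k.+1) - (t - 1) * (F (B k) + 1)) / (F (B k) * F (B k.*2.+1)).
Proof.
move=> t F.
have H := congr1 (@FracField.tofrac _) (key k hk).
rewrite ?(rmorphM, rmorphB, rmorphN, rmorphD, rmorphXn, rmorph1) in H.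
rewrite /t /F B_odd // S_odd // !rmorphD rmorphXn.
have nb : B k != 0 := B_neq0 k hk.
have nb2 := B_neq0 k.*2.+1 isT.
rewrite B_odd // in nb2.
apply: alg.
- by rewrite expf_neq0 // tofrac_eq0 polyX_eq0.
- by rewrite tofrac_eq0.
- by rewrite -rmorphD tofrac_eq0.
exact: H.
Qed.
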